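(* For complex numbers $x,y$ with $y\ne 0$, the double series \[ A(x,y)=\sum_{n=0}^{\infty} x^n\binom{2n}{n}\sum_{k=0}^n\binom{n}{k}^2\binom{2k}{n}(-1)^k y^{2k-n} \] converges absolutely provided \[ \left|16xy\left(\sqrt{\left|\frac{4x}{y}\right|}+\sqrt{1+\left|\frac{4x}{y}\right|}\right)^2\right|<1. \]
   Context: $\binom{2k}{n}=0$ for $n>2k$; absolute convergence means convergence of the double series of absolute values of all terms. *)

(* Defs.v *)
From Stdlib Require Import Reals ZArith.
From Coquelicot Require Import Coquelicot.
Open Scope R_scope.

Fixpoint Cpown (z : C) (n : nat) : C :=
  match n with O => RtoC 1 | S m => Cmult z (Cpown z m) end.

Definition CpowZ (z : C) (m : Z) : C :=
  match m with
  | Z0 => RtoC 1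
  | Zpos p => Cpown z (Pos.to_nat p)
  | Zneg p => Cinv (Cpown z (Pos.to_nat p))
  end.

Definition binom (n k : nat) : R :=
  if (k <=? n)%nat then Binomial.C n k else 0.

Definition Aterm (x y : C) (n k : nat) : C :=
  Cmult (Cmult (Cmult (Cpown x n) (RtoC (binom (2*n) n)))
               (RtoC (binom n k ^ 2 * binom (2*k) n * (-1) ^ k)))
        (CpowZ y (Z.of_nat (2*k) - Z.of_nat n)%Z).

(* Main.v *)
Require Import Defs.
From Stdlib Require Import Reals ZArith Lia Lra.
From Coquelicot Require Import Coquelicot.
Open Scope R_scope.

Lemma C_pos n k : (k <= n)%nat -> 0 < Binomial.C n k.
Proof.
  intros. unfold Binomial.C. apply Rdiv_lt_0_compat.
  apply lt_0_INR, lt_O_fact. apply Rmult_lt_0_compat; apply lt_0_INR, lt_O_fact.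
Qed.

Lemma binom_ge0 n k : 0 <= binom n k.
Proof. unfold binom. destruct (k <=? n)%nat eqn:E; [|lra].
  apply Nat.leb_le in E. left; now apply C_pos. Qed.

Lemma binom_in n k : (k <= n)%nat -> binom n k = Binomial.C n k.
Proof. intros. unfold binom. apply Nat.leb_le in H. now rewrite H. Qed.

Lemma binom_out n k : (n < k)%nat -> binom n k = 0.
Proof. intros. unfold binom. destruct (k <=? n)%nat eqn:E; auto.
  apply Nat.leb_le in E; lia. Qed.

Lemma binom_pascal n i : binom (S n) (S i) = binom n (S i) + binom n i.
Proof.
  destruct (lt_dec i n).
  - rewrite (binom_in (S n)) by lia. rewrite (binom_in n (S i)) by lia.
    rewrite (binom_in n i) by lia. rewrite <- (pascal n i) by lia. lra.
  - destruct (Nat.eq_dec i n).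
    + subst. rewrite (binom_out n (S n)) by lia. rewrite (binom_in (S n)), (binom_in n n) by lia. rewrite !C_n_n. lra.
    + rewrite (binom_out (S n)), (binom_out n (S i)), (binom_out n i) by lia. lra.
Qed.

Lemma sum_ge_term (f : nat -> R) n i : (forall k, 0 <= f k) -> (i <= n)%nat -> f i <= sum_f_R0 f n.
Proof.
  intros Hf. induction n; intros Hi.
  - replace i with 0%nat by lia. simpl. lra.
  - simpl. destruct (Nat.eq_dec i (S n)).
    + subst. assert (0 <= sum_f_R0 f n) by (apply cond_pos_sum; auto). lra.
    + specialize (IHn ltac:(lia)). specialize (Hf (S n)). lra.
Qed.

Lemma C_le_pow2 n k : (k <= n)%nat -> Binomial.C n k <= 2 ^ n.
Proof.
  intros Hk. replace 2 with (1+1) by lra. rewrite binomial.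
  replace (Binomial.C n k) with (Binomial.C n k * 1 ^ k * 1 ^ (n - k)) by (rewrite !pow1; ring).
  apply (sum_ge_term (fun i => Binomial.C n i * 1 ^ i * 1 ^ (n - i))) ; auto.
  intros i. rewrite !pow1. rewrite !Rmult_1_r. unfold Binomial.C. unfold Rdiv.
  apply Rmult_le_pos. apply pos_INR. left. apply Rinv_0_lt_compat.
  apply Rmult_lt_0_compat; apply lt_0_INR, lt_O_fact.
Qed.

Lemma central_le n : Binomial.C (2*n) n <= 4 ^ n.
Proof. replace 4 with (2^2) by lra. rewrite <- pow_mult. apply C_le_pow2. lia. Qed.

Lemma ident j m :
  binom (2*j+m) (j+m) ^ 2 * binom (2*(j+m)) (2*j+m) =
  Binomial.C (2*(j+m)) (j+m) * Binomial.C (2*j+m) (2*j) * Binomial.C (2*j) j.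
Proof.
  rewrite !binom_in by lia. unfold Binomial.C.
  replace (2*j+m - (j+m))%nat with j by lia.
  replace (2*(j+m) - (2*j+m))%nat with m by lia.
  replace (2*(j+m) - (j+m))%nat with (j+m)%nat by lia.
  replace (2*j+m - 2*j)%nat with m by lia.
  replace (2*j - j)%nat with j by lia.
  pose proof (INR_fact_neq_0 j). pose proof (INR_fact_neq_0 m).
  pose proof (INR_fact_neq_0 (j+m)). pose proof (INR_fact_neq_0 (2*j+m)).
  pose proof (INR_fact_neq_0 (2*j)).
  field. repeat split; auto.
Qed.

Lemma key (X s : R) : 0 <= X -> 0 < s -> X * s + 1 = s * s ->
  forall n m, binom n m * X ^ m * s ^ m <= s ^ (2 * n).
Proof.
  intros HX Hs Hxs.
  assert (Hs1 : 1 <= s) by nra.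
  induction n; intros m.
  - destruct m.
    + rewrite binom_in by lia. rewrite C_n_n. simpl. lra.
    + rewrite binom_out by lia. simpl. lra.
  - destruct m.
    + rewrite binom_in by lia. rewrite C_n_0. rewrite !pow_O, !Rmult_1_r.
      apply pow_R1_Rle. lra.
    + rewrite binom_pascal.
      pose proof (IHn (S m)) as H1. pose proof (IHn m) as H2.
      replace (2 * S n)%nat with (S (S (2*n))) by lia.
      change (X ^ S m) with (X * X ^ m) in *. change (s ^ S m) with (s * s ^ m) in *.
      change (s ^ S (S (2*n))) with (s * (s * s ^ (2*n))).
      assert (0 <= X ^ m * s ^ m) by (apply Rmult_le_pos; apply pow_le; lra).
      assert (0 <= X * s) by nra.
      assert (binom n m * X ^ m * s ^ m * (X * s) <= s ^ (2*n) * (X*s)) by (apply Rmult_le_compat_r; auto).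
      replace ((binom n (S m) + binom n m) * (X * X ^ m) * (s * s ^ m))
        with (binom n (S m) * (X * X ^ m) * (s * s ^ m) + binom n m * X ^ m * s ^ m * (X * s)) by ring.
      replace (s * (s * s ^ (2 * n))) with (s ^ (2*n) + s ^ (2*n) * (X * s)) by (replace (s * (s * s ^ (2 * n))) with ((s*s) * s ^ (2 * n)) by ring; rewrite <- Hxs; ring).
      lra.
Qed.

Lemma pow2n (x : R) j : x ^ (2*j) = x ^ j * x ^ j.
Proof. replace (2*j)%nat with (j+j)%nat by lia. apply pow_add. Qed.

Lemma term_bound a b t X s (Ha: 0<=a) (Hb: 0<b) (Ht: t*b = 4*a) (HX: 0<=X)
  (HXX: X*X = 4*t) (Hs: 0<s) (Hxs: X*s+1 = s*s) j m :
  a^(2*j+m) * binom (2*(2*j+m)) (2*j+m) *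
    (binom (2*j+m) (j+m) ^ 2 * binom (2*(j+m)) (2*j+m)) * b^m
  <= (16*a*b*(s*s))^(j+m).
Proof.
  rewrite ident. rewrite binom_in by lia.
  set (Cb := Binomial.C (2*j+m) (2*j)).
  assert (HCb : 0 <= Cb) by (left; apply C_pos; lia).
  pose proof (central_le (2*j+m)) as H1.
  pose proof (central_le (j+m)) as H2.
  pose proof (central_le j) as H3.
  assert (P1 : 0 <= Binomial.C (2*(2*j+m)) (2*j+m)) by (left; apply C_pos; lia).
  assert (P2 : 0 <= Binomial.C (2*(j+m)) (j+m)) by (left; apply C_pos; lia).
  assert (P3 : 0 <= Binomial.C (2*j) j) by (left; apply C_pos; lia).
  assert (Hab : 0 <= a^(2*j+m) * b^m * Cb).
  { apply Rmult_le_pos; [apply Rmult_le_pos|]; auto; apply pow_le; lra. }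
  apply Rle_trans with (a^(2*j+m) * b^m * Cb * (4^(2*j+m) * 4^(j+m) * 4^j)).
  { replace (a ^ (2 * j + m) * Binomial.C (2 * (2 * j + m)) (2 * j + m) *
      (Binomial.C (2 * (j + m)) (j + m) * Cb * Binomial.C (2 * j) j) * b ^ m)
     with (a^(2*j+m) * b^m * Cb * (Binomial.C (2 * (2 * j + m)) (2 * j + m) *
      Binomial.C (2 * (j + m)) (j + m) * Binomial.C (2 * j) j)) by ring.
    apply Rmult_le_compat_l; auto.
    apply Rmult_le_compat; [apply Rmult_le_pos; auto | exact P3 | | exact H3].
    apply Rmult_le_compat; auto. }
  pose proof (key X s HX Hs Hxs (2*j+m) (2*j)) as K.
  rewrite binom_in in K by lia. fold Cb in K.
  rewrite !pow2n in K. rewrite <- Rpow_mult_distr in K. rewrite HXX in K.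
  assert (K2 : Cb * (16^j * a^j) <= b^j * (s^(j+m) * s^(j+m))).
  { assert (Hsj : 0 < s^j * s^j) by (apply Rmult_lt_0_compat; apply pow_lt; lra).
    apply (Rmult_le_reg_r (s^j * s^j)); auto.
    replace (Cb * (16 ^ j * a ^ j) * (s ^ j * s ^ j))
      with (b^j * (Cb * (4 * t) ^ j * (s ^ j * s ^ j))).
    2:{ replace (16 ^ j * a ^ j) with ((4*t*b)^j) by (replace (4*t*b) with (16*a) by lra; rewrite Rpow_mult_distr; ring).
        rewrite !Rpow_mult_distr. ring. }
    replace (b ^ j * (s ^ (j + m) * s ^ (j + m)) * (s ^ j * s ^ j))
      with (b^j * (s ^ (2 * j + m) * s ^ (2 * j + m))).
    2:{ rewrite !pow_add, !pow2n. ring. }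
    apply Rmult_le_compat_l. apply pow_le; lra.
    exact K. }
  assert (HQ : 0 <= 16^(j+m) * a^(j+m) * b^m).
  { apply Rmult_le_pos; [apply Rmult_le_pos|]; apply pow_le; lra. }
  apply Rle_trans with ((b^j * (s^(j+m) * s^(j+m))) * (16^(j+m) * a^(j+m) * b^m)).
  - apply Rle_trans with ((Cb * (16^j * a^j)) * (16^(j+m) * a^(j+m) * b^m)).
    + right. replace 16 with (4*4) by lra.
      rewrite ?Rpow_mult_distr, ?pow_add, ?pow2n. ring.
    + apply Rmult_le_compat_r; auto.
  - right. replace 16 with (4*4) by lra.
    rewrite ?Rpow_mult_distr, ?pow_add, ?pow2n. ring.
Qed.

Lemma Cmod_pown z n : Cmod (Cpown z n) = Cmod z ^ n.
Proof. induction n; simpl. apply Cmod_1. rewrite Cmod_mult, IHn. ring. Qed.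

Lemma CpowZ_nat y m : CpowZ y (Z.of_nat m) = Cpown y m.
Proof. destruct m. reflexivity. simpl. now rewrite SuccNat2Pos.id_succ. Qed.

Lemma Cmod_Aterm x y n k : Cmod (Aterm x y n k) =
  Cmod x ^ n * binom (2*n) n * (binom n k ^ 2 * binom (2*k) n) * Cmod (CpowZ y (Z.of_nat (2*k) - Z.of_nat n)%Z).
Proof.
  unfold Aterm. rewrite !Cmod_mult, !Cmod_R, Cmod_pown.
  rewrite (Rabs_pos_eq (binom (2*n) n)) by apply binom_ge0.
  rewrite !Rabs_mult, pow_1_abs, Rmult_1_r.
  rewrite (Rabs_pos_eq (binom (2*k) n)) by apply binom_ge0.
  rewrite (Rabs_pos_eq (binom n k ^ 2)) by (apply pow_le, binom_ge0).
  ring.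
Qed.

Lemma pow_le_dec (u : R) p q : 0 <= u <= 1 -> (p <= q)%nat -> u ^ q <= u ^ p.
Proof.
  intros Hu Hpq. replace q with (p + (q - p))%nat by lia. rewrite pow_add.
  rewrite <- (Rmult_1_r (u^p)) at 2. apply Rmult_le_compat_l. apply pow_le; lra.
  rewrite <- (pow1 (q-p)). apply pow_incr. lra.
Qed.

Lemma nt_bound (u : R) n : 0 <= u < 1 -> INR (S n) * u ^ n <= / (1 - u).
Proof.
  intros Hu.
  apply Rle_trans with (sum_f_R0 (fun i => u ^ i) n).
  - rewrite <- (Rmult_comm (u^n)), <- sum_cte. apply sum_Rle. intros i Hi.
    apply pow_le_dec; [lra|lia].
  - rewrite tech3 by lra. unfold Rdiv. rewrite <- (Rmult_1_l (/ (1-u))) at 2.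
    apply Rmult_le_compat_r. left; apply Rinv_0_lt_compat; lra.
    pose proof (pow_le u (S n)). lra.
Qed.

Lemma Aterm_zero x y n k : (2*k < n)%nat -> Cmod (Aterm x y n k) = 0.
Proof. intros H. rewrite Cmod_Aterm, (binom_out (2*k) n) by lia. ring. Qed.

Lemma Aterm_le x y t X s (Hb: 0 < Cmod y) (Ht: t*Cmod y = 4*Cmod x) (HX: 0<=X)
  (HXX: X*X = 4*t) (Hs: 0<s) (Hxs: X*s+1 = s*s) n k :
  (n <= 2*k)%nat -> (k <= n)%nat ->
  Cmod (Aterm x y n k) <= (16*Cmod x*Cmod y*(s*s))^k.
Proof.
  intros H1 H2.
  assert (exists j m, n = (2*j+m)%nat /\ k = (j+m)%nat) as [j [m [E1 E2]]].
  { exists (n-k)%nat, (2*k-n)%nat. lia. }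
  subst n k.
  rewrite Cmod_Aterm.
  replace (Z.of_nat (2 * (j + m)) - Z.of_nat (2 * j + m))%Z with (Z.of_nat m) by lia.
  rewrite CpowZ_nat, Cmod_pown.
  apply (term_bound (Cmod x) (Cmod y) t X s); auto. apply Cmod_ge_0.
Qed.

Theorem proposition2p2 (x y : C) :
  y <> RtoC 0 ->
  Cmod (Cmult (Cmult (RtoC 16) (Cmult x y))
          (RtoC ((sqrt (Cmod (Cdiv (Cmult (RtoC 4) x) y))
                  + sqrt (1 + Cmod (Cdiv (Cmult (RtoC 4) x) y))) ^ 2))) < 1 ->
  ex_series (fun n : nat => sum_f_R0 (fun k => Cmod (Aterm x y n k)) n).
Proof.
  intros Hy Hc.
  assert (Hb : 0 < Cmod y) by (apply Cmod_gt_0; exact Hy).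
  set (t := Cmod (Cdiv (Cmult (RtoC 4) x) y)) in *.
  assert (Ht : t * Cmod y = 4 * Cmod x).
  { unfold t. rewrite Cmod_div by exact Hy. rewrite Cmod_mult, Cmod_R, Rabs_pos_eq by lra.
    field. lra. }
  assert (Ht0 : 0 <= t) by apply Cmod_ge_0.
  set (s := sqrt t + sqrt (1 + t)) in *.
  set (X := 2 * sqrt t).
  assert (Hst : sqrt t * sqrt t = t) by (apply sqrt_sqrt; lra).
  assert (Hs1 : sqrt (1+t) * sqrt (1+t) = 1 + t) by (apply sqrt_sqrt; lra).
  assert (HX : 0 <= X) by (unfold X; pose proof (sqrt_pos t); lra).
  assert (HXX : X * X = 4 * t) by (unfold X; nra).
  assert (Hs : 0 < s).
  { unfold s. pose proof (sqrt_pos t). assert (0 < sqrt (1+t)) by (apply sqrt_lt_R0; lra). lra. }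
  assert (Hxs : X * s + 1 = s * s) by (unfold X, s; nra).
  set (rho := 16 * Cmod x * Cmod y * (s * s)).
  assert (Hrho : rho < 1).
  { revert Hc. rewrite !Cmod_mult, !Cmod_R. rewrite (Rabs_pos_eq 16) by lra.
    rewrite (Rabs_pos_eq (s^2)) by (apply pow_le; lra). unfold rho. intros; nra. }
  assert (Hrho0 : 0 <= rho).
  { unfold rho. pose proof (Cmod_ge_0 x). apply Rmult_le_pos; [|nra].
    apply Rmult_le_pos; lra. }
  set (tau := sqrt (sqrt rho)).
  assert (Hsr : 0 <= sqrt rho) by apply sqrt_pos.
  assert (Htau0 : 0 <= tau) by apply sqrt_pos.
  assert (Hsr1 : sqrt rho < 1) by (rewrite <- sqrt_1; apply sqrt_lt_1_alt; lra).
  assert (Htau1 : tau < 1) by (unfold tau; rewrite <- sqrt_1; apply sqrt_lt_1_alt; lra).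
  assert (Htau4 : rho = tau ^ 4).
  { unfold tau. replace 4%nat with (2*2)%nat by reflexivity. rewrite pow_mult.
    rewrite pow2_sqrt by lra. rewrite pow2_sqrt by lra. reflexivity. }
  apply (@ex_series_le R_AbsRing R_CompleteNormedModule _ (fun n => / (1 - tau) * tau ^ n)).
  - intros n.
    assert (Hnn : 0 <= sum_f_R0 (fun k => Cmod (Aterm x y n k)) n).
    { apply cond_pos_sum. intros; apply Cmod_ge_0. }
    change (norm _) with (Rabs (sum_f_R0 (fun k => Cmod (Aterm x y n k)) n)).
    rewrite Rabs_pos_eq by exact Hnn.
    apply Rle_trans with (sum_f_R0 (fun _ => tau ^ (2*n)) n).
    + apply sum_Rle. intros k Hk.
      destruct (le_lt_dec n (2*k)).
      * eapply Rle_trans. apply (Aterm_le x y t X s); auto.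
        fold rho. rewrite Htau4, <- pow_mult. apply pow_le_dec; [lra|lia].
      * rewrite Aterm_zero by lia. apply pow_le; lra.
    + rewrite sum_cte. rewrite pow2n.
      pose proof (nt_bound tau n ltac:(lra)).
      assert (0 <= tau ^ n) by (apply pow_le; lra).
      replace (tau ^ n * tau ^ n * INR (S n)) with (tau^n * (INR (S n) * tau ^ n)) by ring.
      rewrite (Rmult_comm (/ (1 - tau))). apply Rmult_le_compat_l; auto.
  - apply (ex_series_scal (/ (1 - tau)) (fun n => tau ^ n)).
    exists (/ (1 - tau)). apply is_series_geom. rewrite Rabs_pos_eq; lra.
Qed.
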